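(* Let $\mathcal{A}$ be an alphabet with $d\ge3$ letters, $B\in\mathcal{A}$, $\mathcal{A}'=\mathcal{A}\setminus\{B\}$, let $\pi$ be an irreducible permutation on $\mathcal{A}$, and let $\pi'$ be obtained from $\pi$ by removing $B$ from the top and bottom rows; assume $\pi'$ is irreducible. Then either $g(\pi)=g(\pi')$ or $g(\pi)=g(\pi')+1$. Moreover, the following are equivalent: (1) $g(\pi)=g(\pi')$; (2) $H(\pi)$ is spanned by $\{\Omega(\pi)e_x: x\in\mathcal{A}'\}$; (3) $e_B\notin H(\pi)$; (4) $e_B$ does not belong to the span of $\{\Omega(\pi)e_x: x\in\mathcal{A}'\}$; (5) the natural projection $P:\mathbb{R}^{\mathcal{A}}\to\mathbb{R}^{\mathcal{A}'}$ restricts to a symplectic isomorphism $(H(\pi),\omega_\pi)\to(H(\pi'),\omega_{\pi'})$.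
   Context: A permutation on $\mathcal{A}$ is a pair $\pi=(\pi_0,\pi_1)$ of bijections $\mathcal{A}\to\{1,\dots,\#\mathcal{A}\}$ (top and bottom rows); irreducible means no $1\le k<\#\mathcal{A}$ with $\pi_0^{-1}(\{1,\dots,k\})=\pi_1^{-1}(\{1,\dots,k\})$. $\Omega(\pi)$ is the operator on $\mathbb{R}^{\mathcal{A}}$ (canonical basis $e_x$) with $\langle\Omega(\pi)e_x,e_y\rangle=1$ if $\pi_0(x)>\pi_0(y),\pi_1(x)<\pi_1(y)$; $-1$ if $\pi_0(x)<\pi_0(y),\pi_1(x)>\pi_1(y)$; $0$ otherwise. $H(\pi)=\Omega(\pi)\mathbb{R}^{\mathcal{A}}$, $2g(\pi)=\dim H(\pi)$, and $\omega_\pi(\Omega(\pi)u,\Omega(\pi)v)=\langle u,\Omega(\pi)v\rangle$ is a symplectic form on $H(\pi)$; similarly for $\pi'$ on $\mathbb{R}^{\mathcal{A}'}$. *)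

(* Defs.v *)
From HB Require Import structures.
From mathcomp Require Import all_boot all_order all_algebra.
From mathcomp Require Import reals.
Set Implicit Arguments. Unset Strict Implicit. Unset Printing Implicit Defensive.
Import Order.TTheory GRing.Theory Num.Theory.
Local Open Scope ring_scope.

(* A "permutation" on a finite alphabet T is a pair (p0, p1) of bijections
   T -> {1, ..., #|T|} (top and bottom rows).  *)
Definition is_bij_row (T : finType) (p : T -> nat) : Prop :=
  injective p /\ (forall x, (1 <= p x <= #|T|)%N).

Definition irreducible_perm (T : finType) (p0 p1 : T -> nat) : Prop :=
  ~ (exists k : nat, [/\ (1 <= k)%N, (k < #|T|)%N &
        [set x | (p0 x <= k)%N] = [set x | (p1 x <= k)%N]]).

Definition sub_alph (A : finType) (B : A) : finType := {x : A | x != B}.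

Definition remove_letter (A : finType) (B : A) (p : A -> nat)
    : sub_alph B -> nat :=
  fun x => (#|[set y : sub_alph B | (p (val y) < p (val x))%N]|).+1.
Arguments remove_letter {A} B p.

(* Vectors in R^T are row vectors 'rV[R]_#|T|, coordinates indexed through
   enum_val / enum_rank.  Row x of Omega is the vector Omega(pi) e_x, i.e.
   (Omega i j) = < Omega(pi) e_x, e_y > with x = enum_val i, y = enum_val j.
   Hence Omega(pi) u = u *m Omega and <u, v> = u *m v^T. *)
Definition Omega (R : nzRingType) (T : finType) (p0 p1 : T -> nat)
    : 'M[R]_#|T| :=
  \matrix_(i, j)
    let x := enum_val i in let y := enum_val j in
    if (p0 y < p0 x)%N && (p1 x < p1 y)%N then 1
    else if (p0 x < p0 y)%N && (p1 y < p1 x)%N then -1 else 0.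

Definition evec (R : nzRingType) (T : finType) (x : T) : 'rV[R]_#|T| :=
  delta_mx 0 (enum_rank x).

(* dim H(pi) = 2 g(pi), where H(pi) = Omega(pi) R^T is the row space of Omega *)
Definition twice_genus (R : fieldType) (T : finType) (p0 p1 : T -> nat) : nat :=
  \rank (Omega R p0 p1).

Definition span_sub (R : fieldType) (A : finType) (B : A) (p0 p1 : A -> nat)
    : 'M[R]_#|A| :=
  (\sum_(x : A | x != B) <<row (enum_rank x) (Omega R p0 p1)>>)%MS.

Definition projP (R : nzRingType) (A : finType) (B : A)
    : 'M[R]_(#|A|, #|sub_alph B|) :=
  \matrix_(i, j) (enum_val i == val (enum_val j))%:R.
Arguments projP R {A} B.

(* P restricts to a symplectic isomorphism (H(pi), w_pi) -> (H(pi'), w_pi'),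
   where w_pi(Omega u, Omega v) = <u, Omega v>. *)
Definition sympl_iso (R : fieldType) (A : finType) (B : A) (p0 p1 : A -> nat)
    : Prop :=
  let M := Omega R p0 p1 in
  let M' := Omega R (remove_letter B p0) (remove_letter B p1) in
  let P := projP R B in
  [/\ (forall v : 'rV_#|A|, (v <= M)%MS -> (v *m P <= M')%MS),
      (forall v : 'rV_#|A|, (v <= M)%MS -> v *m P = 0 -> v = 0),
      (forall w : 'rV_#|sub_alph B|, (w <= M')%MS ->
          exists2 v : 'rV_#|A|, (v <= M)%MS & v *m P = w) &
      (forall (u v : 'rV_#|A|) (u' v' : 'rV_#|sub_alph B|),
          u' *m M' = (u *m M) *m P -> v' *m M' = (v *m M) *m P ->
          u' *m (v' *m M')^T = u *m (v *m M)^T)].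

(* Main.v *)
Require Import Defs.
From HB Require Import structures.
From mathcomp Require Import all_boot all_order all_algebra.
From mathcomp Require Import reals.
From mathcomp Require Import lra zify.
Import Order.TTheory GRing.Theory Num.Theory.
Local Open Scope ring_scope.

Section Abs.
Variable F : realFieldType.

Lemma skew_quad k (N : 'M[F]_k) (x : 'rV_k) : N^T = -N -> x *m N *m x^T = 0.
Proof.
move=> hN; set s := x *m N *m x^T.
have h1 : s^T = - s by rewrite /s !trmx_mul trmxK hN ?mulNmx ?mulmxN ?mulNmx mulmxA.
have h2 : s^T = s by rewrite [s]mx11_scalar tr_scalar_mx.
rewrite [s]mx11_scalar.
have : s 0 0 = - s 0 0 by rewrite -{1}h2 h1 mxE.
move=> h; have -> : s 0 0 = 0 by move: (s 0 0) h => a ha; lra. by apply/matrixP=> i j; rewrite !mxE mul0rn.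
Qed.

Variables (n m : nat) (M : 'M[F]_n) (P : 'M[F]_(n, m)) (e : 'rV[F]_n).
Hypotheses (skM : M^T = - M) (QP : P^T *m P = 1%:M)
  (PQe : P *m P^T + e^T *m e = 1%:M) (eP : e *m P = 0) (e0 : e != 0).

Variables (K : 'M[F]_m) (c : 'cV[F]_m).
Hypotheses (hK : K = P^T *m M *m P) (hcd : c = P^T *m M *m e^T).

Lemma skK : K^T = - K.
Proof. by rewrite hK !trmx_mul trmxK skM ?mulNmx ?mulmxN ?mulNmx mulmxA. Qed.

Lemma eMP : e *m M *m P = - c^T.
Proof. by rewrite hcd !trmx_mul !trmxK skM !(mulNmx, mulmxN) opprK mulmxA. Qed.

Lemma Pte : P^T *m e^T = 0.
Proof. by rewrite -trmx_mul eP trmx0. Qed.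

Lemma QM_dec : P^T *m M = K *m P^T + c *m e.
Proof.
by rewrite hK hcd -{1}[M]mulmx1 -PQe !mulmxDr !mulmxA.
Qed.

Lemma eM_dec : e *m M = - c^T *m P^T.
Proof.
rewrite -{1}[M]mulmx1 -PQe !mulmxDr !mulmxA eMP.
by rewrite (@skew_quad _ M e skM) mul0mx addr0.
Qed.

Lemma M_dec : M = P *m (K *m P^T + c *m e) + e^T *m (- c^T *m P^T).
Proof.
by rewrite -QM_dec -eM_dec -{1}[M]mul1mx -PQe !mulmxDl !mulmxA.
Qed.


Definition SI :=
  [/\ (forall v : 'rV_n, (v <= M)%MS -> (v *m P <= K)%MS),
      (forall v : 'rV_n, (v <= M)%MS -> v *m P = 0 -> v = 0),
      (forall w : 'rV_m, (w <= K)%MS ->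
          exists2 v : 'rV_n, (v <= M)%MS & v *m P = w) &
      (forall (u v : 'rV_n) (u' v' : 'rV_m),
          u' *m K = (u *m M) *m P -> v' *m K = (v *m M) *m P ->
          u' *m (v' *m K)^T = u *m (v *m M)^T)].

Lemma caseA : (c^T <= K)%MS ->
  [/\ \rank M = \rank K, (P^T *m M == M)%MS, ~~ (e <= M)%MS & SI].
Proof.
case/submxP=> y hy.
have hc : c = - (K *m y^T).
  by rewrite -[c]trmxK hy trmx_mul skK mulNmx.
set U := P - e^T *m y.
set V := P^T - y^T *m e.
have hUV : U = V^T by rewrite /U /V linearB /= trmx_mul !trmxK.
have hQU : P^T *m U = 1%:M by rewrite /U mulmxBr QP mulmxA Pte mul0mx subr0.
have hVP : V *m P = 1%:M by rewrite /V mulmxBl QP -mulmxA eP mulmx0 subr0.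
have hq : e^T *m (y *m K *m y^T) *m e = 0 by rewrite (@skew_quad _ K y skK) mulmx0 mul0mx.
have hM : M = U *m K *m V.
  rewrite {1}M_dec hc linearN /= trmx_mul trmxK skK /U /V.
  rewrite !mulmxBl !mulmxBr !mulmxDr !mulmxN !mulNmx !mulmxA.
  rewrite !mulmxA in hq. rewrite hq subr0.
  by rewrite hK !(mulmxN, mulNmx, opprK, mulmxA).
have hQM : P^T *m M = K *m V by rewrite {1}hM !mulmxA hQU mul1mx.
have hMP : M *m P = U *m K by rewrite {1}hM -mulmxA hVP mulmx1.
have hMQ : M = U *m (P^T *m M) by rewrite hQM mulmxA -hM.
have rK : (\rank K <= \rank M)%N.
  by rewrite hK; apply: leq_trans (mxrankM_maxl _ _) (mxrankM_maxr _ _).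
have rM : (\rank M <= \rank K)%N.
  by rewrite {1}hM; apply: leq_trans (mxrankM_maxl _ _) (mxrankM_maxr _ _).
split.
- by apply/eqP; rewrite eqn_leq rM rK.
- apply/andP; split; first exact: submxMl.
  by rewrite {1}hMQ submxMl.
- apply/negP; case/submxP=> x hx.
  have : e *m P = x *m U *m K by rewrite hx -[x *m M *m P]mulmxA hMP mulmxA.
  rewrite eP => h0; move/eqP: e0; apply; rewrite hx {1}hM !mulmxA; by rewrite -h0 mul0mx.
split.
- move=> v /submxP[x ->]; by rewrite -mulmxA hMP mulmxA submxMl.
- move=> v /submxP[x ->]; rewrite -mulmxA hMP mulmxA => h0.
  by rewrite {1}hM !mulmxA h0 mul0mx.
- move=> w /submxP[x ->]; exists (x *m K *m V).
    by rewrite -mulmxA -hQM mulmxA submxMl.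
  by rewrite -mulmxA hVP mulmx1.
move=> u v u' v' hu hv.
rewrite hv -[v *m M *m P]mulmxA hMP.
have hu2 : u' *m K^T = u *m U *m K^T by rewrite skK !mulmxN hu -[u *m M *m P]mulmxA hMP mulmxA.
by rewrite {1}hM !trmx_mul -hUV !mulmxA hu2.
Qed.

Lemma caseB : ~~ (c^T <= K)%MS ->
  [/\ \rank M = (\rank K + 2)%N, \rank (P^T *m M) = (\rank K).+1
    & (e <= P^T *m M)%MS].
Proof.
move=> ncK.
set Ck := cokermx K.
have KCk : K *m Ck = 0 by exact: mulmx_coker.
have cCk : c^T *m Ck != 0 by rewrite -submxE.
have CkK : Ck^T *m K = 0.
  by rewrite -[K]trmxK -trmx_mul skK mulNmx KCk oppr0 trmx0.
set w := Ck^T *m c.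
have w0 : w != 0 by rewrite /w -[c]trmxK -trmx_mul trmx_eq0.
have hw : Ck^T *m (P^T *m M) = w *m e by rewrite QM_dec mulmxDr !mulmxA CkK mul0mx add0r.
have eS : (e <= P^T *m M)%MS.
  have [i hi] : exists i, w i 0 != 0.
    apply/existsP; move: w0; apply: contraR; rewrite negb_exists => /forallP h.
    apply/eqP/matrixP=> i j; rewrite [j]ord1; move: (h i); rewrite negbK => /eqP ->; by rewrite mxE.
  have : (row i (w *m e) <= P^T *m M)%MS.
    by rewrite -hw; apply: submx_trans (row_sub _ _) (submxMl _ _).
  rewrite row_mul [row i w]mx11_scalar mul_scalar_mx mxE.
  by rewrite (eqmx_scale _ hi).
have rfQ : row_free P^T by apply/row_freeP; exists P.
have rKQ : \rank (K *m P^T) = \rank K by rewrite mxrankMfree.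
have eKQ : ~~ (e <= K *m P^T)%MS.
  apply/negP; case/submxP=> x hx; move/eqP: e0; apply.
  have : e *m P = x *m K by rewrite hx -mulmxA -(mulmxA K) QP mulmx1.
  by rewrite eP hx mulmxA => <-; rewrite mul0mx.
have cKQ : ~~ (c^T *m P^T <= K *m P^T + e)%MS.
  apply/negP; case/sub_addsmxP=> [[u1 u2]] /= h.
  move: ncK; rewrite (_ : c^T = u1 *m K) ?submxMl //.
  have := congr1 (fun X => X *m P) h; rewrite /= mulmxDl -!mulmxA QP mulmx1 eP mulmx0 addr0.
  by rewrite mulmx1.
set S1 := (K *m P^T + e)%MS.
set S2 := (S1 + c^T *m P^T)%MS.
have lt1 : (K *m P^T < S1)%MS.
  by rewrite ltmxE addsmxSl /= /S1 addsmx_sub submx_refl /=.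
have lt2 : (S1 < S2)%MS.
  by rewrite ltmxE addsmxSl /= /S2 addsmx_sub submx_refl /=.
have rS1 : \rank S1 = (\rank K).+1.
  apply/eqP; rewrite eqn_leq; apply/andP; split; last by rewrite -rKQ; exact: rank_ltmx.
  apply: leq_trans (mxrank_adds_leqif _ _).1 _.
  by rewrite rKQ -[X in (_ <= X)%N]addn1 leq_add2l rank_leq_row.
have rS2 : \rank S2 = (\rank K + 2)%N.
  apply/eqP; rewrite eqn_leq; apply/andP; split; last first.
    by rewrite addn2 -rS1; exact: rank_ltmx.
  apply: leq_trans (mxrank_adds_leqif _ _).1 _.
  by rewrite rS1 addn2 -[X in (_ <= X)%N]addn1 leq_add2l rank_leq_row.
have hKQ : K *m P^T = P^T *m M - c *m e by rewrite QM_dec addrK.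
have eSr : (e <= S1)%MS by rewrite addsmxSr.
have QMS1 : (P^T *m M == S1)%MS.
  apply/andP; split.
    rewrite QM_dec addmx_sub ?addsmxSl //.
    exact: submx_trans (submxMl _ _) eSr.
  rewrite /S1 addsmx_sub eS andbT hKQ addmx_sub ?submx_refl //.
  by rewrite eqmx_opp (submx_trans (submxMl _ _) eS).
have hcQ : c^T *m P^T = - (e *m M) by rewrite eM_dec mulNmx opprK.
have MS2 : (M == S2)%MS.
  apply/andP; split.
    rewrite {1}M_dec -QM_dec addmx_sub //.
      apply: submx_trans (submxMl _ _) _.
      by case/andP: QMS1 => h _; apply: submx_trans h (addsmxSl _ _).
    apply: submx_trans (submxMl _ _) _.
    by rewrite mulNmx eqmx_opp addsmxSr.
  rewrite /S2 addsmx_sub hcQ eqmx_opp submxMl andbT.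
  case/andP: QMS1 => _ h; apply: submx_trans h (submxMl _ _).
split=> //.
  by rewrite (eqmx_rank MS2).
by rewrite (eqmx_rank QMS1).
Qed.

Lemma abs_main k (S : 'M[F]_(k, n)) : (S == P^T *m M)%MS ->
  ((\rank M = \rank K) \/ (\rank M = \rank K + 2)%N) /\
  [<-> \rank M = \rank K; (S == M)%MS; ~~ (e <= M)%MS; ~~ (e <= S)%MS; SI].
Proof.
move=> hSb; have hS := eqmxP hSb.
have QMM : (P^T *m M <= M)%MS by exact: submxMl.
case: (boolP (c^T <= K)%MS) => [ca|cb].
  have [r hQ ne si] := caseA ca.
  have ne' : ~~ (e <= S)%MS.
    by apply: contra ne; rewrite hS => /submx_trans; apply.
  have hSM : (S == M)%MS by case/andP: hQ => h1 h2; apply/andP; rewrite !hS.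
  split; first by left.
  rewrite /all_iff /=.
  split; first by move=> _; exact: hSM.
  split; first by move=> _.
  split; first by move=> _.
  split; first by move=> _.
  by move=> _.
have [r rQ eQ] := caseB cb.
have f0 : \rank M <> \rank K by rewrite r => /eqP; rewrite -{2}[\rank K]addn0 eqn_add2l.
have f1 : ~~ (S == M)%MS.
  by apply/negP => /eqmx_rank; rewrite (eqmx_rank hSb) rQ r addn2 => /eqP; rewrite eqSS (ltn_eqF (ltnSn _)).
have f3 : (e <= S)%MS by rewrite hS.
have f2 : (e <= M)%MS by apply: submx_trans eQ QMM.
have f4 : ~ SI by case=> _ h _ _; move/eqP: e0; apply; apply: h f2 eP.
split; first by right.
rewrite /all_iff /=; split; [|split; [|split; [|split]]].
- by move=> /f0.
- by move=> h; move: f1; rewrite h.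
- by rewrite f2.
- by rewrite f3.
- by move=> /f4.
Qed.
End Abs.

Section Conc.
Variables (R : realType) (A : finType) (B : A).

Lemma ev_eq (i : 'I_#|A|) x : (enum_val i == x) = (i == enum_rank x).
Proof. by apply/eqP/eqP => [<-|->]; rewrite ?enum_valK ?enum_rankK. Qed.

Let r (j : 'I_#|sub_alph B|) : 'I_#|A| := enum_rank (val (enum_val j)).

Lemma projPE i j : projP R B i j = (enum_val i == val (enum_val j))%:R.
Proof. by rewrite mxE. Qed.

Lemma mulP_E l (N : 'M[R]_(l, #|A|)) i k : (N *m projP R B) i k = N i (r k).
Proof.
rewrite mxE (bigD1 (r k)) //= big1 ?addr0.
  by rewrite projPE /r enum_rankK eqxx mulr1.
move=> i' hi'; rewrite projPE ev_eq (negbTE hi') mulr0 //.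
Qed.

Lemma mulPt_E l (N : 'M[R]_(#|A|, l)) j k : ((projP R B)^T *m N) j k = N (r j) k.
Proof.
rewrite mxE (bigD1 (r j)) //= big1 ?addr0.
  by rewrite mxE projPE /r enum_rankK eqxx mul1r.
move=> i' hi'; rewrite mxE projPE ev_eq (negbTE hi') mul0r //.
Qed.


Lemma rl_lt (p : A -> nat) (x y : sub_alph B) :
  (remove_letter B p x < remove_letter B p y)%N = (p (val x) < p (val y))%N.
Proof.
rewrite /remove_letter ltnS; apply/idP/idP.
  apply: contraLR; rewrite -!leqNgt => hyx.
  apply: subset_leq_card; apply/subsetP => z; rewrite !inE => hz.
  exact: leq_trans hz hyx.
move=> hxy; apply: proper_card; apply/properP; split.
  apply/subsetP => z; rewrite !inE => hz; exact: ltn_trans hz hxy.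
by exists x; rewrite !inE ?ltnn.
Qed.

Lemma Omega_skew (p0 p1 : A -> nat) : (Omega R p0 p1)^T = - Omega R p0 p1.
Proof.
apply/matrixP => i j; rewrite !mxE /=.
repeat case: ifP; intros; rewrite ?oppr0 ?opprK //; exfalso; lia.
Qed.

Lemma hK (p0 p1 : A -> nat) :
  Omega R (remove_letter B p0) (remove_letter B p1)
  = (projP R B)^T *m Omega R p0 p1 *m projP R B.
Proof.
apply/matrixP => j k; rewrite mulP_E mulPt_E !mxE /r !enum_rankK !rl_lt //.
Qed.

Lemma QP : (projP R B)^T *m projP R B = 1%:M.
Proof.
apply/matrixP => j k; rewrite mulPt_E projPE /r enum_rankK !mxE.
by rewrite (inj_eq val_inj) (inj_eq enum_val_inj).
Qed.

Lemma eP : evec R B *m projP R B = 0.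
Proof.
apply/matrixP => i k; rewrite mulP_E !mxE /r.
rewrite (inj_eq enum_rank_inj); have := valP (enum_val k).
by move=> /negbTE ->; rewrite andbF.
Qed.

Lemma e0 : evec R B != 0.
Proof.
apply/negP => /eqP/matrixP/(_ 0 (enum_rank B)); rewrite !mxE !eqxx /=.
by move/eqP; rewrite oner_eq0.
Qed.


Lemma PQe : projP R B *m (projP R B)^T + (evec R B)^T *m evec R B = 1%:M.
Proof.
apply/matrixP => i i'.
rewrite mxE [X in X + _]mxE [X in _ + X]mxE big_ord1 !mxE /= -!ev_eq.
case: (eqVneq (enum_val i) B) => hi.
  rewrite big1 ?add0r; last first.
    move=> j _; rewrite !mxE hi eq_sym.
    by have := valP (enum_val j); move/negbTE => ->; rewrite mul0r.
  have -> : i = enum_rank B by rewrite -hi enum_valK.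
  by rewrite mul1r ev_eq eq_sym.
pose x : sub_alph B := exist _ (enum_val i) hi.
rewrite (bigD1 (enum_rank x)) //= big1.
  rewrite !mxE enum_rankK /= eqxx mul1r mul0r !addr0.
  by rewrite ev_eq enum_valK eq_sym.
move=> j hj; rewrite !mxE.
case: eqP => [h|]; last by rewrite mul0r.
case/eqP: hj; apply: enum_val_inj; rewrite enum_rankK; apply: val_inj.
by rewrite -h.
Qed.

Lemma span_eq (p0 p1 : A -> nat) :
  (span_sub R B p0 p1 == (projP R B)^T *m Omega R p0 p1)%MS.
Proof.
apply/andP; split.
  apply/sumsmx_subP => x hx; rewrite genmxE.
  pose y : sub_alph B := exist _ x hx.
  rewrite (_ : row (enum_rank x) _ = row (enum_rank y) ((projP R B)^T *m Omega R p0 p1)) ?row_sub //.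
  by apply/rowP => k; rewrite [LHS]mxE [RHS]mxE mulPt_E /r enum_rankK.
apply/row_subP => j.
apply: (sumsmx_sup (val (enum_val j))); first exact: (valP (enum_val j)).
rewrite genmxE (_ : row j _ = row (enum_rank (val (enum_val j))) (Omega R p0 p1)) ?submx_refl //.
by apply/rowP => k; rewrite [LHS]mxE [RHS]mxE mulPt_E.
Qed.

End Conc.

Theorem lemma5p3 (R : realType) (A : finType) (B : A) (p0 p1 : A -> nat) :
  (3 <= #|A|)%N ->
  is_bij_row p0 -> is_bij_row p1 ->
  irreducible_perm p0 p1 ->
  irreducible_perm (remove_letter B p0) (remove_letter B p1) ->
  (twice_genus R p0 p1 = twice_genus R (remove_letter B p0) (remove_letter B p1)
   \/ twice_genus R p0 p1
        = (twice_genus R (remove_letter B p0) (remove_letter B p1) + 2)%N)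
  /\
  [<-> twice_genus R p0 p1 = twice_genus R (remove_letter B p0) (remove_letter B p1);
       (span_sub R B p0 p1 == Omega R p0 p1)%MS;
       ~~ (evec R B <= Omega R p0 p1)%MS;
       ~~ (evec R B <= span_sub R B p0 p1)%MS;
       sympl_iso R B p0 p1].
Proof.
move=> _ _ _ _ _.
exact: (@abs_main R #|A| #|sub_alph B| (Omega R p0 p1) (projP R B) (evec R B)
  (@Omega_skew R A p0 p1) (@QP R A B) (@PQe R A B) (@eP R A B) (@e0 R A B)
  (Omega R (remove_letter B p0) (remove_letter B p1)) _ (@hK R A B p0 p1)
  (erefl _) _ _ (@span_eq R A B p0 p1)).
Qed.
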